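(* Let $\Sigma$ be an alphabet, let $Z\subseteq \Sigma^{\mathbb Z}$ be a sofic shift and let $f:\mathbb R^n\times Z\to\mathbb R^n$ be an arbitrary function. The system $$x(k+1)=f(x(k),\omega(k)),\qquad \omega(k+1)=\sigma(\omega(k)),\qquad x(0)=x_0\in\mathbb R^n,\ \omega(0)=\bar z\in Z$$ is globally uniformly asymptotically stable (GUAS) if and only if there exists a sequence-dependent Lyapunov function for it.
   Context: $\Sigma$ is a nonempty countable set (alphabet). $\Sigma^{\mathbb Z}$ is the set of bi-infinite sequences $\bar z=(z_k)_{k\in\mathbb Z}$ with $z_k\in\Sigma$, and $\sigma:\Sigma^{\mathbb Z}\to\Sigma^{\mathbb Z}$ is the shift, $\sigma(\bar z)_k=z_{k+1}$. A labeled graph on $\Sigma$ is $\mathcal G=(S,E)$ with $S$ a finite set of nodes and $E\subseteq S\times S\times\Sigma$. A bi-infinite walk labeled by $\bar z$ is a sequence $(e_k)_{k\in\mathbb Z}$ of edges $e_k=(s_k,s_{k+1},z_k)\in E$. $\mathcal Z(\mathcal G)$ is the set of $\bar z\in\Sigma^{\mathbb Z}$ labeling some bi-infinite walk. A set $Z\subseteq\Sigma^{\mathbb Z}$ is a sofic shift if $Z=\mathcal Z(\mathcal G)$ for some labeled graph $\mathcal G$ (so $\sigma(Z)=Z$). $\Phi(k,x_0,\bar z)$ denotes the state $x(k)$ of the solution of the system above (so $x(k+1)=f(x(k),\sigma^k(\bar z))$). Classes: $\alpha:\mathbb R_{\ge0}\to\mathbb R_{\ge0}$ is of class $\mathcal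 K$ if continuous, strictly increasing, $\alpha(0)=0$; of class $\mathcal K_\infty$ if moreover unbounded; $\beta:\mathbb R_{\ge0}\times\mathbb R_{\ge0}\to\mathbb R_{\ge0}$ is of class $\mathcal{KL}$ if continuous, $\beta(\cdot,s)\in\mathcal K$ for each $s$, and $\beta(r,\cdot)$ is decreasing with limit $0$ for each $r$. GUAS: there exists $\beta\in\mathcal{KL}$ with $|\Phi(k,x_0,\bar z)|\le\beta(|x_0|,k)$ for all $k\in\mathbb N$, $x_0\in\mathbb R^n$, $\bar z\in Z$. A sequence-dependent Lyapunov function is a function $\mathcal V:\mathbb R^n\times Z\to\mathbb R$ for which there exist $\alpha_1,\alpha_2\in\mathcal K_\infty$ and $\gamma\in[0,1)$ with $\alpha_1(|x|)\le\mathcal V(x,\bar z)\le\alpha_2(|x|)$ and $\mathcal V(f(x,\bar z),\sigma(\bar z))\le\gamma\,\mathcal V(x,\bar z)$ for all $x\in\mathbb R^n$, $\bar z\in Z$. *)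

(* Defs.v *)
From HB Require Import structures.
From mathcomp Require Import all_boot all_order all_algebra.
From mathcomp Require Import all_classical all_reals all_analysis.
Set Implicit Arguments. Unset Strict Implicit. Unset Printing Implicit Defensive.
Import Order.TTheory GRing.Theory Num.Theory.
Import numFieldNormedType.Exports.
Local Open Scope classical_set_scope.
Local Open Scope ring_scope.

Definition biseq (Sigma : Type) := int -> Sigma.

Definition shift (Sigma : Type) (z : biseq Sigma) : biseq Sigma :=
  fun k => z (k + 1)%R.

Definition graph_labels (Sigma : Type) (S : finType) (E : set (S * S * Sigma))
  : set (biseq Sigma) :=
  [set z | exists s : int -> S, forall k : int, E (s k, s (k + 1)%R, z k)].

Definition sofic (Sigma : Type) (Z : set (biseq Sigma)) : Prop :=
  exists (S : finType) (E : set (S * S * Sigma)), Z = graph_labels E.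

Definition enorm (R : realType) (n : nat) (x : 'rV[R]_n) : R :=
  Num.sqrt (\sum_(i < n) x ord0 i ^+ 2).

Fixpoint Phi (R : realType) (n : nat) (Sigma : Type)
  (f : 'rV[R]_n -> biseq Sigma -> 'rV[R]_n) (k : nat) (x0 : 'rV[R]_n)
  (z : biseq Sigma) : 'rV[R]_n :=
  match k with
  | O => x0
  | k'.+1 => f (Phi f k' x0 z) (iter k' (@shift Sigma) z)
  end.

Definition nonneg (R : realType) : set R := [set x | 0 <= x].

Definition classK (R : realType) (a : R -> R) : Prop :=
  [/\ {within [set x : R | 0 <= x], continuous a},
      (forall r s, 0 <= r -> r < s -> a r < a s),
      (forall r, 0 <= r -> 0 <= a r) &
      a 0 = 0].

Definition classKinf (R : realType) (a : R -> R) : Prop :=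
  classK a /\ (forall M : R, exists r, 0 <= r /\ M < a r).

Definition classKL (R : realType) (b : R -> R -> R) : Prop :=
  [/\ {within [set p : R * R | 0 <= p.1 /\ 0 <= p.2],
         continuous (fun p : R * R => b p.1 p.2)},
      (forall s, 0 <= s -> classK (fun r => b r s)) &
      (forall r, 0 <= r ->
         (forall s t, 0 <= s -> s <= t -> b r t <= b r s) /\
         (b r t @[t --> +oo] --> 0))].

Definition GUAS (R : realType) (n : nat) (Sigma : Type)
  (Z : set (biseq Sigma)) (f : 'rV[R]_n -> biseq Sigma -> 'rV[R]_n) : Prop :=
  exists b : R -> R -> R, classKL b /\
    forall (k : nat) (x0 : 'rV[R]_n) (z : biseq Sigma), Z z ->
      enorm (Phi f k x0 z) <= b (enorm x0) k%:R.

Definition seq_lyapunov (R : realType) (n : nat) (Sigma : Type)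
  (Z : set (biseq Sigma)) (f : 'rV[R]_n -> biseq Sigma -> 'rV[R]_n)
  (V : 'rV[R]_n -> biseq Sigma -> R) : Prop :=
  exists (a1 a2 : R -> R) (g : R),
    [/\ classKinf a1, classKinf a2, 0 <= g, g < 1 &
      forall (x : 'rV[R]_n) (z : biseq Sigma), Z z ->
        [/\ a1 (enorm x) <= V x z, V x z <= a2 (enorm x) &
            V (f x z) (shift z) <= g * V x z]].

(* Main.v *)
Require Import Defs.
From HB Require Import structures.
From mathcomp Require Import all_boot all_order all_algebra.
From mathcomp Require Import all_classical all_reals all_analysis.
From mathcomp Require Import ring lra.
Set Implicit Arguments. Unset Strict Implicit. Unset Printing Implicit Defensive.
Import Order.TTheory GRing.Theory Num.Theory.
Import numFieldNormedType.Exports.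
Import Num.Def.
Require Import Defs.
Local Open Scope classical_set_scope.
Local Open Scope ring_scope.
Section Tk.
Variable R : realType.

Definition wcont {T : pseudoMetricType R} (P : set T) (f : T -> R) (x : T) :=
  f @ within P (nbhs x) --> f x.

Lemma wcontP {T : pseudoMetricType R} (P : set T) f x :
  wcont P f x <-> forall e : R, 0 < e -> exists2 d : R, 0 < d &
    forall y, P y -> ball x d y -> `|f x - f y| < e.
Proof.
rewrite /wcont; split => [/cvgrPdist_lt H e e0 | H].
  have := H e e0; rewrite near_withinE => /nbhs_ballP [d /= d0 Hd].
  by exists d => // y Py bxy; apply: Hd.
apply/cvgrPdist_lt => e e0; have [d d0 Hd] := H e e0.
rewrite near_withinE; near=> y => Py; apply: Hd => //; near: y; exact: nbhsx_ballx.
Unshelve. all: by end_near.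
Qed.

Lemma wcontPR (P : set R) f x :
  wcont P f x <-> forall e : R, 0 < e -> exists2 d : R, 0 < d &
    forall y, P y -> `|x - y| < d -> `|f x - f y| < e.
Proof.
rewrite wcontP; split => H e e0; have [d d0 Hd] := H e e0; exists d => // y Py xy;
  apply: Hd => //; move: xy; by rewrite -ball_normE.
Qed.

Lemma wcont_within {T : pseudoMetricType R} (P : set T) f :
  (forall x, P x -> wcont P f x) -> {within P, continuous f}.
Proof.
move=> H; rewrite continuous_subspace_in => x; rewrite inE => Px.
have K := H x Px; move: K; rewrite /wcont nbhs_subspace_in //.
Qed.

Lemma within_wcont {T : pseudoMetricType R} (P : set T) f x :
  {within P, continuous f} -> P x -> wcont P f x.
Proof.
move=> H Px; have K := H x; rewrite /wcont nbhs_subspace_in //.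
Qed.

Lemma cont_wcont {T : pseudoMetricType R} (P : set T) f x :
  {for x, continuous f} -> wcont P f x.
Proof. move=> H; rewrite /wcont; exact: cvg_within_filter. Qed.

Lemma wcontM {T : pseudoMetricType R} (P : set T) f g x :
  wcont P f x -> wcont P g x -> wcont P (fun y => f y * g y) x.
Proof. move=> Hf Hg; exact: cvgM. Qed.

Lemma wcontD {T : pseudoMetricType R} (P : set T) f g x :
  wcont P f x -> wcont P g x -> wcont P (fun y => f y + g y) x.
Proof. move=> Hf Hg; exact: cvgD. Qed.

Lemma wcont_comp {T : pseudoMetricType R} (P : set T) (Q : set R) g (f : R -> R) x :
  wcont P g x -> wcont Q f (g x) -> (forall y, P y -> Q (g y)) ->
  wcont P (fun y => f (g y)) x.
Proof.
move=> /wcontP Hg /wcontPR Hf PQ; apply/wcontP => e e0.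
have [d1 d10 H1] := Hf e e0; have [d2 d20 H2] := Hg d1 d10.
by exists d2 => // y Py bxy; apply: H1; [exact: PQ | exact: H2].
Qed.

Lemma wcont_eq {T : pseudoMetricType R} (P : set T) f g x :
  (forall y, P y -> f y = g y) -> P x -> wcont P f x -> wcont P g x.
Proof.
move=> E Px /wcontP H; apply/wcontP => e e0; have [d d0 Hd] := H e e0.
by exists d => // y Py b; rewrite -!E //; exact: Hd.
Qed.

Lemma wcontW {T : pseudoMetricType R} (P Q : set T) f x :
  P `<=` Q -> wcont Q f x -> wcont P f x.
Proof.
move=> PQ /wcontP H; apply/wcontP => e e0; have [d d0 Hd] := H e e0.
by exists d => // y Py b; apply: Hd => //; exact: PQ.
Qed.

Lemma wcont_pos (f : R -> R) (x : R) : 0 < x ->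
  wcont [set y : R | 0 < y] f x -> wcont [set y : R | 0 <= y] f x.
Proof.
move=> x0 /wcontPR H; apply/wcontPR => e e0; have [d d0 Hd] := H e e0.
exists (minr d x); first by rewrite lt_min d0 x0.
move=> y y0; rewrite lt_min => /andP[yd yx]; apply: Hd => //.
move: yx; rewrite ltr_norml => /andP[] ? ?; rewrite /= in y0 *; lra.
Qed.

End Tk.
Section Maj.
Variable R : realType.
Definition Phi_ (y : R) := 1 - (1 + y)^-1.
Definition Psi_ (t : R) := (1 - t)^-1 - 1.

Lemma Phi_ge0 y : 0 <= y -> 0 <= Phi_ y.
Proof. move=> y0; rewrite /Phi_ subr_ge0 invf_le1 ?lerDl // ltr_wpDr //. Qed.
Lemma Phi_lt1 y : 0 <= y -> Phi_ y < 1.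
Proof. move=> y0; rewrite /Phi_ ltrBlDr ltrDl invr_gt0 ltr_wpDr //. Qed.
Lemma Phi_mono y y' : 0 <= y -> y <= y' -> Phi_ y <= Phi_ y'.
Proof.
move=> y0 yy; rewrite /Phi_ lerB // lef_pV2 ?posrE ?ltr_wpDr ?lerD //.
exact: (le_trans y0).
Qed.
Lemma PsiPhi y : 0 <= y -> Psi_ (Phi_ y) = y.
Proof.
move=> y0; rewrite /Psi_ /Phi_.
have -> : 1 - (1 - (1 + y)^-1) = (1 + y)^-1 by ring.
by rewrite invrK; ring.
Qed.
Lemma Psi_mono t t' : t <= t' -> t' < 1 -> Psi_ t <= Psi_ t'.
Proof.
move=> tt t1; rewrite /Psi_ lerB // lef_pV2 ?posrE ?subr_gt0 ?lerB //.
exact: (le_lt_trans tt).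
Qed.
Lemma Psi_ge0 t : 0 <= t -> t < 1 -> 0 <= Psi_ t.
Proof.
move=> t0 t1; rewrite /Psi_ subr_ge0 invf_ge1 ?subr_gt0 // lerBlDr lerDl //.
Qed.
Lemma Psi_cont t : t < 1 -> {for t, continuous Psi_}.
Proof.
move=> t1; rewrite /Psi_.
apply: cvgB; last exact: cvg_cst.
apply: cvgV; first by rewrite subr_eq0 gt_eqF.
apply: cvgB; [exact: cvg_cst | exact: cvg_id].
Qed.
Variable F : R -> R.
Hypothesis HF0 : forall r, 0 <= r -> 0 <= F r.
Hypothesis HFm : forall r s, 0 <= r -> r <= s -> F r <= F s.

Let g v := Phi_ (F (expR v)).
Lemma g_ge0 v : 0 <= g v. Proof. by apply: Phi_ge0; apply: HF0; exact: ltW (expR_gt0 _). Qed.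
Lemma g_lt1 v : g v < 1. Proof. by apply: Phi_lt1; apply: HF0; exact: ltW (expR_gt0 _). Qed.
Lemma g_mono v w : v <= w -> g v <= g w.
Proof.
move=> vw; apply: Phi_mono; first by apply: HF0; exact: ltW (expR_gt0 _).
by apply: HFm; [exact: ltW (expR_gt0 _) | rewrite ler_expR].
Qed.

Let S u := [set g v - maxr (v - u) 0 | v in [set: R]].
Let gh u := sup (S u).

Lemma S_ne u : S u !=set0. Proof. by exists (g u - maxr (u - u) 0); exists u. Qed.
Lemma S_ub u : ubound (S u) 1.
Proof.
move=> _ [v _ <-]; apply: le_trans (ltW (g_lt1 v)).
by rewrite lerBlDr lerDl le_max lexx orbT.
Qed.
Lemma S_hub u : has_ubound (S u). Proof. by exists 1; exact: S_ub. Qed.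

Lemma gh_ge u : g u <= gh u.
Proof.
apply: ub_le_sup; first exact: S_hub.
by exists u => //; rewrite subrr maxxx subr0.
Qed.
Lemma gh_ge0 u : 0 <= gh u. Proof. exact: le_trans (g_ge0 u) (gh_ge u). Qed.
Lemma gh_le u : gh u <= g (u + 1).
Proof.
apply: ge_sup; first exact: S_ne.
move=> _ [v _ <-].
have [vu|uv] := lerP v (u + 1).
  by apply: le_trans (g_mono vu); rewrite lerBlDr lerDl le_max lexx orbT.
apply: le_trans (g_ge0 _); rewrite subr_le0; apply: le_trans (ltW (g_lt1 v)) _.
by rewrite le_max; apply/orP; left; rewrite lerBrDl; exact: ltW.
Qed.
Lemma gh_lt1 u : gh u < 1. Proof. exact: le_lt_trans (gh_le u) (g_lt1 _). Qed.
Lemma gh_mono u u' : u <= u' -> gh u <= gh u'.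
Proof.
move=> uu; apply: ge_sup; first exact: S_ne.
move=> _ [v _ <-]; apply: le_trans (ub_le_sup (S_hub u') _); last by exists v.
rewrite lerB // ge_max; apply/andP; split; last by rewrite le_max lexx orbT.
by rewrite le_max; apply/orP; left; lra.
Qed.
Lemma gh_lip u u' : gh u <= gh u' + `|u - u'|.
Proof.
apply: ge_sup; first exact: S_ne.
move=> _ [v _ <-]; rewrite -lerBlDr.
apply: le_trans (ub_le_sup (S_hub u') _); last by exists v.
rewrite -addrA lerD2l.
suff : maxr (v - u') 0 <= maxr (v - u) 0 + `|u - u'| by lra.
rewrite ge_max; apply/andP; split; last first.
  by apply: addr_ge0 => //; rewrite le_max lexx orbT.
apply: (@le_trans _ _ (v - u + `|u - u'|)); first by have := ler_norm (u - u'); lra.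
by rewrite lerD2r le_max lexx.
Qed.
Lemma gh_cont u : {for u, continuous gh}.
Proof.
apply/cvgrPdist_lt => e e0; near=> u'.
have h1 := gh_lip u u'; have h2 := gh_lip u' u.
rewrite distrC in h2.
have : `|u - u'| < e by near: u'; apply: (filterS _ (nbhsx_ballx u e e0)) => y; rewrite -ball_normE.
move=> H; rewrite ltr_norml; apply/andP; split; lra.
Unshelve. all: by end_near.
Qed.
Hypothesis HF_0 : forall e, 0 < e -> exists2 d, 0 < d & forall r, 0 <= r -> r <= d -> F r <= e.

Let a r := if 0 < r then Psi_ (gh (ln r)) + r else 0.

Lemma F0_le0 : F 0 <= 0.
Proof.
case: (lerP (F 0) 0) => // h.
have [d d0 Hd] := HF_0 (divr_gt0 h (ltr0Sn _ 1)).
have := Hd 0 (lexx _) (ltW d0); lra.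
Qed.

Lemma g_ln r : 0 < r -> g (ln r) = Phi_ (F r).
Proof. by move=> r0; rewrite /g lnK. Qed.

Lemma a_maj r : 0 <= r -> F r <= a r.
Proof.
rewrite /a le_eqVlt => /orP[/eqP <-|r0]; first by rewrite ltxx; exact: F0_le0.
rewrite r0 -{1}(PsiPhi (HF0 (ltW r0))) -g_ln //.
apply: (le_trans (Psi_mono (gh_ge _) (gh_lt1 _))); rewrite lerDl; exact: ltW.
Qed.

Lemma a0 : a 0 = 0. Proof. by rewrite /a ltxx. Qed.
Lemma a_ge0 r : 0 <= r -> 0 <= a r.
Proof.
rewrite /a; case: ifP => // r0 _; apply: addr_ge0; last exact: ltW.
exact: Psi_ge0 (gh_ge0 _) (gh_lt1 _).
Qed.
Lemma a_ge r : 0 <= r -> r <= a r.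
Proof.
rewrite /a; case: ifP => [r0 _|]; last by move=> /negbT; rewrite -leNgt.
by rewrite lerDr; exact: Psi_ge0 (gh_ge0 _) (gh_lt1 _).
Qed.
Lemma a_strict r s : 0 <= r -> r < s -> a r < a s.
Proof.
move=> r0 rs; have s0 : 0 < s by exact: le_lt_trans rs.
rewrite /a s0; case: ifP => [r0'|_]; last first.
  by apply: ltr_wpDl => //; exact: Psi_ge0 (gh_ge0 _) (gh_lt1 _).
apply: ler_ltD => //; apply: Psi_mono (gh_lt1 _); apply: gh_mono.
by rewrite ler_ln ?posrE // ltW.
Qed.


Lemma a_cont : {within [set x : R | 0 <= x], continuous a}.
Proof.
apply: wcont_within => x /= x0.
case: (ltrP 0 x) => xp.
  apply: wcont_pos => //.
  apply: (@wcont_eq _ _ [set y : R | 0 < y] (fun y => Psi_ (gh (ln y)) + y)) => //.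
    by move=> y /= y0; rewrite /a y0.
  apply: wcontD; last exact: cont_wcont cvg_id.
  apply: (@wcont_comp _ _ _ setT) => //.
    apply: (@wcont_comp _ _ _ setT) => //.
      exact: cont_wcont (continuous_ln xp).
    apply: cont_wcont. exact: gh_cont.
  exact: cont_wcont (Psi_cont (gh_lt1 _)).
have -> : x = 0 by apply/le_anti; rewrite xp x0.
apply/wcontPR => e e0.
have e20 : 0 < e / 2 by rewrite divr_gt0.
have [d d0 Hd] := HF_0 e20.
have E0 := expR_gt0 (1 : R).
exists (minr (d / expR 1) (e / 2)); first by rewrite lt_min e20 andbT divr_gt0.
move=> y /= y0 H; rewrite a0 sub0r normrN ger0_norm ?a_ge0 //; move: H; rewrite sub0r normrN ger0_norm // lt_min => /andP[yd ye].
rewrite /a; case: ifP => [yp|_]; last by [].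
have h1 : Psi_ (gh (ln y)) <= F (y * expR 1).
  apply: (le_trans (Psi_mono (gh_le _) (g_lt1 _))).
  by rewrite /g PsiPhi ?expRD ?lnK // HF0 // mulr_ge0 // ltW.
have h2 : F (y * expR 1) <= e / 2.
  apply: Hd; first by rewrite mulr_ge0 // ltW.
  by rewrite -ler_pdivlMr // ltW.
lra.
Qed.

Lemma majorant_ex : exists a : R -> R, classKinf a /\ forall r, 0 <= r -> F r <= a r.
Proof.
exists a; split; last exact: a_maj.
split; last first.
  move=> M; have h1 := normr_ge0 M; have h2 := ler_norm M.
  exists (`|M| + 1); split; first lra.
  by apply: lt_le_trans (a_ge _); lra.
split => //; [exact: a_cont | exact: a_strict | exact: a_ge0 | exact: a0].
Qed.
End Maj.

Section Min.
Variable R : realType.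
Variable h : R -> R.
Hypothesis hm : forall r s, 0 < r -> r <= s -> h r <= h s.
Hypothesis hp : forall r, 0 < r -> 0 < h r.
Hypothesis hu : forall M, exists r, 0 < r /\ M <= h r.

Let F r := if 0 < r then (h r^-1)^-1 else 0.

Lemma F_ge0 r : 0 <= r -> 0 <= F r.
Proof. by rewrite /F; case: ifP => // r0 _; rewrite invr_ge0 ltW // hp // invr_gt0. Qed.

Lemma F_mono r s : 0 <= r -> r <= s -> F r <= F s.
Proof.
move=> r0 rs; rewrite /F; case: ifP => [rp|_]; last first.
  by case: ifP => // sp; rewrite invr_ge0 ltW // hp // invr_gt0.
have sp : 0 < s by exact: lt_le_trans rs.
rewrite sp lef_pV2 ?posrE ?hp ?invr_gt0 //; apply: hm; first by rewrite invr_gt0.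
by rewrite lef_pV2 ?posrE.
Qed.

Lemma F_0 e : 0 < e -> exists2 d, 0 < d & forall r, 0 <= r -> r <= d -> F r <= e.
Proof.
move=> e0; have [r0 [r00 Hr0]] := hu e^-1.
exists r0^-1; first by rewrite invr_gt0.
move=> r rg rd; rewrite /F; case: ifP => [rp|_]; last exact: ltW.
have : r0 <= r^-1 by rewrite -(invrK r0) lef_pV2 ?posrE ?invr_gt0.
move=> /(hm r00) => H.
rewrite -(invrK e) lef_pV2 ?posrE ?invr_gt0 ?hp //; [exact: le_trans Hr0 H | by rewrite invr_gt0].
Qed.

Lemma minorant_ex : exists psi : R -> R, classKinf psi /\ forall s, 0 < s -> psi s <= h s.
Proof.
have [A [[[Acont Astr Age0 A0] Aunb] Amaj]] := majorant_ex F_ge0 F_mono F_0.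
have Apos r : 0 < r -> 0 < A r by move=> r0; rewrite -A0; apply: Astr.
exists (fun s => (A s^-1)^-1); split; last first.
  move=> s s0; have sp : 0 < s^-1 by rewrite invr_gt0.
  have := Amaj s^-1 (ltW sp).
  rewrite /F invr_gt0 s0 invrK => H.
  by rewrite -(invrK (h s)) lef_pV2 ?posrE ?Apos ?invr_gt0 ?hp.
split; last first.
  move=> M; have := Acont 0; move=> _.
  have /wcontPR := within_wcont Acont (lexx (0:R)).
  have e0 : 0 < (`|M| + 1)^-1 by rewrite invr_gt0 ltr_wpDl.
  move=> /(_ _ e0) [d d0 Hd].
  exists (d / 2)^-1; split; first by rewrite ltW // invr_gt0 divr_gt0.
  rewrite invrK.
  have d20 : 0 < d / 2 by rewrite divr_gt0.
  have H1 : `|0 - d / 2| < d.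
    by rewrite sub0r normrN ger0_norm ?(ltW d20) // ltr_pdivrMr // ltr_pMr // ltr1n.
  have := Hd _ (ltW d20) H1; rewrite A0 sub0r normrN ger0_norm ?(ltW (Apos _ d20)) // => H.
  have H2 : `|M| + 1 < (A (d / 2))^-1.
    by rewrite -(invrK (`|M| + 1)) ltf_pV2 ?posrE ?invr_gt0 ?Apos // ltr_wpDl.
  have := ler_norm M; lra.
split.
- apply: wcont_within => x /= x0.
  case: (ltrP 0 x) => xp.
    apply: (@wcont_comp _ _ _ setT) => //; last first.
      apply: cont_wcont; apply: inv_continuous; rewrite gt_eqF // Apos // invr_gt0 //.
    apply: (@wcont_comp _ _ _ [set y : R | 0 <= y]).
    + apply: cont_wcont; apply: inv_continuous; rewrite gt_eqF //.
    + by apply: within_wcont Acont _; rewrite /= invr_ge0.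
    + by move=> y /=; rewrite invr_ge0.
  have -> : x = 0 by apply/le_anti; rewrite xp x0.
  apply/wcontPR => e e0.
  have [r1 [r10 Hr1]] := Aunb e^-1.
  exists (r1 + 1)^-1; first by rewrite invr_gt0 ltr_wpDl.
  move=> y /= y0 yd; rewrite invr0 A0 invr0 sub0r normrN.
  rewrite le_eqVlt in y0; case/orP: y0 => [/eqP <-|yp].
    by rewrite invr0 A0 invr0 normr0.
  rewrite sub0r normrN ger0_norm ?(ltW yp) // in yd.
  rewrite ger0_norm; last by rewrite invr_ge0 Age0 // invr_ge0 ltW.
  have : r1 < y^-1.
    have : (r1 + 1) < y^-1 by rewrite -(invrK (r1 + 1)) ltf_pV2 ?posrE ?invr_gt0 ?ltr_wpDl.
    lra.
  move=> /(Astr _ _ r10) H.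
  rewrite -(invrK e) ltf_pV2 ?posrE ?invr_gt0 ?Apos //; [exact: lt_trans Hr1 H | by rewrite invr_gt0].
- move=> r s r0 rs; have sp : 0 < s by exact: le_lt_trans r0 rs.
  case: (ltrP 0 r) => rp; last first.
    have -> : r = 0 by apply/le_anti; rewrite rp r0.
    by rewrite invr0 A0 invr0 invr_gt0 Apos // invr_gt0.
  rewrite ltf_pV2 ?posrE ?Apos ?invr_gt0 //; apply: Astr; first by rewrite ltW // invr_gt0.
  by rewrite ltf_pV2 ?posrE.
- by move=> r r0; rewrite invr_ge0 Age0 // invr_ge0.
- by rewrite invr0 A0 invr0.
Qed.
End Min.

Lemma Kmono (R : realType) (a : R -> R) x y : classK a -> 0 <= x -> x <= y -> a x <= a y.
Proof.
move=> [_ Hs _ _] x0; rewrite le_eqVlt => /orP[/eqP->//|xy]; exact: ltW (Hs _ _ x0 xy).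
Qed.

Lemma Kpos (R : realType) (a : R -> R) x : classK a -> 0 < x -> 0 < a x.
Proof. by move=> [_ Hs _ a0] x0; rewrite -a0; apply: Hs. Qed.

Lemma sofic_shift (Sigma : Type) (Z : set (biseq Sigma)) z :
  sofic Z -> Z z -> Z (shift z).
Proof.
move=> [S [E ->]] [s Hs]; exists (fun k => s (k + 1)%R) => k.
exact: (Hs (k + 1)%R).
Qed.

Lemma sofic_iter (Sigma : Type) (Z : set (biseq Sigma)) z k :
  sofic Z -> Z z -> Z (iter k (@shift Sigma) z).
Proof. by move=> HZ Zz; elim: k => //= k IH; exact: sofic_shift. Qed.

Lemma Phi_shift (R : realType) n (Sigma : Type) (f : 'rV[R]_n -> biseq Sigma -> 'rV[R]_n) k x z :
  Phi f k (f x z) (shift z) = Phi f k.+1 x z.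
Proof. by elim: k => //= k ->; rewrite -iterSr. Qed.

Lemma enorm_ge0 (R : realType) n (x : 'rV[R]_n) : 0 <= enorm x.
Proof. exact: sqrtr_ge0. Qed.

Section Easy.
Variables (R : realType) (Sigma : Type) (Z : set (biseq Sigma)) (n : nat)
  (f : 'rV[R]_n -> biseq Sigma -> 'rV[R]_n) (V : 'rV[R]_n -> biseq Sigma -> R).
Hypothesis HZ : sofic Z.
Variables (a1 a2 : R -> R) (g : R).
Hypothesis Ka1 : classKinf a1.
Hypothesis Ka2 : classKinf a2.
Hypothesis g0 : 0 <= g.
Hypothesis g1 : g < 1.
Hypothesis HV : forall (x : 'rV[R]_n) (z : biseq Sigma), Z z ->
        [/\ a1 (enorm x) <= V x z, V x z <= a2 (enorm x) &
            V (f x z) (shift z) <= g * V x z].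

Lemma V_iter k x z : Z z -> V (Phi f k x z) (iter k (@shift Sigma) z) <= g ^+ k * V x z.
Proof.
move=> Zz; elim: k => [|k IH] /=; first by rewrite expr0 mul1r.
have [_ _ H] := HV (Phi f k x z) (sofic_iter k HZ Zz).
apply: le_trans H _; rewrite exprS -mulrA; exact: ler_wpM2l.
Qed.

Let Sa y := [set x : R | 0 <= x /\ a1 x <= y].
Let Fa y := sup (Sa y).

Lemma Sa_ub y : exists2 r, 0 <= r & ubound (Sa y) r.
Proof.
have [[_ Hs _ _] Hu] := Ka1; have [r [r0 Hr]] := Hu y.
exists r => // x [x0 xy]; rewrite leNgt; apply/negP => rx.
have := Hs _ _ r0 rx; lra.
Qed.
Lemma Sa_hub y : has_ubound (Sa y).
Proof. by have [r _ H] := Sa_ub y; exists r. Qed.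
Lemma Sa0 y : 0 <= y -> Sa y 0.
Proof. by move=> y0; split => //; have [[_ _ _ ->] _] := Ka1. Qed.

Lemma Fa_ge0 y : 0 <= y -> 0 <= Fa y.
Proof. by move=> y0; apply: ub_le_sup (Sa_hub y) _ (Sa0 y0). Qed.
Lemma Fa_mono y y' : 0 <= y -> y <= y' -> Fa y <= Fa y'.
Proof.
move=> y0 yy; apply: ge_sup; first by exists 0; exact: Sa0.
move=> x [x0 xy]; apply: ub_le_sup (Sa_hub y') _ _; split => //; exact: le_trans yy.
Qed.
Lemma Fa_0 e : 0 < e -> exists2 d, 0 < d & forall r, 0 <= r -> r <= d -> Fa r <= e.
Proof.
move=> e0; have [Ka _] := Ka1; have ae := Kpos Ka e0.
exists (a1 e / 2); first by rewrite divr_gt0.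
move=> r r0 rd; apply: ge_sup; first by exists 0; exact: Sa0.
move=> x [x0 xr]; rewrite leNgt; apply/negP => ex.
have [_ Hs _ _] := Ka; have := Hs _ _ (ltW e0) ex; lra.
Qed.

Lemma lyap_GUAS : GUAS Z f.
Proof.
have [A [[[Acont Astr Age0 A0] Aunb] Amaj]] := majorant_ex Fa_ge0 Fa_mono Fa_0.
have KA : classK A by [].
have [[a2cont a2str a2ge0 a20] _] := Ka2.
have Ka2' : classK a2 by case: Ka2.
pose c := 1 - g.
have c0 : 0 < c by rewrite /c subr_gt0.
pose b r t := A (expR (- (c * t)) * a2 r).
exists b; split; last first.
  move=> k x0 z Zz.
  have H1 : Sa (expR (- (c * k%:R)) * a2 (enorm x0)) (enorm (Phi f k x0 z)).
    split; first exact: enorm_ge0.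
    have [Hl _ _] := HV (Phi f k x0 z) (sofic_iter k HZ Zz).
    have [_ Hu _] := HV x0 Zz.
    have Vge0 : 0 <= V x0 z.
      have [Hl0 _ _] := HV x0 Zz; apply: le_trans Hl0; have [[_ _ a1ge0 _] _] := Ka1; exact: a1ge0 (enorm_ge0 _).
    have gk : g ^+ k <= expR (- (c * k%:R)).
      have -> : - (c * k%:R) = k%:R * (- c) by ring.
      rewrite expRM_natl; apply: lerXn2r; rewrite ?nnegrE ?expR_ge0 //.
      by have := expR_ge1Dx (- c); rewrite /c => h; lra.
    apply: (le_trans Hl); apply: (le_trans (V_iter _ _ Zz)).
    apply: (le_trans (ler_wpM2l (exprn_ge0 _ g0) Hu)).
    by apply: ler_wpM2r => //; exact: a2ge0 (enorm_ge0 _).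
  have y0 : 0 <= expR (- (c * k%:R)) * a2 (enorm x0).
    by rewrite mulr_ge0 ?expR_ge0 // a2ge0 // enorm_ge0.
  apply: le_trans (Amaj _ y0); exact: ub_le_sup (Sa_hub _) _ H1.
have Eg0 p : 0 <= expR (- (c * p)) by rewrite expR_ge0.
split.
- apply: wcont_within => p /= [p1 p2].
  apply: (@wcont_comp _ _ _ [set y : R | 0 <= y]); last first.
  + by move=> q /= [q1 q2]; rewrite mulr_ge0 // a2ge0.
  + by apply: within_wcont Acont _; rewrite /= mulr_ge0 // a2ge0.
  apply: wcontM.
    apply: cont_wcont.
    apply: (@continuous_comp _ _ _ snd (fun t => expR (- (c * t)))); first exact: cvg_snd.
    apply: (@continuous_comp _ _ _ (fun t => - (c * t)) expR); last exact: continuous_expR.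
    by apply: cvgN; apply: cvgM; [exact: cvg_cst | exact: cvg_id].
  apply: (@wcont_comp _ _ _ [set y : R | 0 <= y]).
  + exact: cont_wcont cvg_fst.
  + exact: within_wcont a2cont p1.
  + by move=> q /= [].
- move=> s s0; rewrite /b; split.
  + apply: wcont_within => r /= r0.
    apply: (@wcont_comp _ _ _ [set y : R | 0 <= y]); last first.
    * by move=> q /= q0; rewrite mulr_ge0 // a2ge0.
    * by apply: within_wcont Acont _; rewrite /= mulr_ge0 // a2ge0.
    apply: wcontM; first by apply: cont_wcont; exact: cvg_cst.
    exact: within_wcont a2cont r0.
  + move=> r r' r0 rr; apply: Astr; first by rewrite mulr_ge0 // a2ge0.
    by rewrite ltr_pM2l ?expR_gt0 //; exact: a2str.
  + by move=> r r0; apply: Age0; rewrite mulr_ge0 // a2ge0.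
  + by rewrite a20 mulr0 A0.
- move=> r r0; split.
    move=> s t s0 st; apply: Kmono KA _ _; first by rewrite mulr_ge0 // a2ge0.
    apply: ler_wpM2r; first exact: a2ge0.
    by rewrite ler_expR lerN2 ler_wpM2l // ltW.
  apply/cvgrPdist_lt => e e0.
  have [d d0 Hd] := (wcontPR _ _ _).1 (within_wcont Acont (lexx 0)) e e0.
  have a2r := a2ge0 _ r0.
  exists (a2 r / (c * d)); split; first by rewrite num_real.
  move=> t Mt /=.
  have t0 : 0 < t by apply: le_lt_trans Mt; rewrite divr_ge0 // mulr_ge0 // ltW.
  have y0 : 0 <= expR (- (c * t)) * a2 r by rewrite mulr_ge0.
  have := Hd _ y0; rewrite A0 !sub0r !normrN [X in X < d -> _]ger0_norm // => H.
  suff K : expR (- (c * t)) * a2 r < d by have := H K; rewrite ger0_norm // Age0.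
  set E := expR (- (c * t)).
  have E0 : 0 < E by exact: expR_gt0.
  have h2 : E * (1 + c * t) <= 1.
    have hE : E * expR (c * t) = 1 by rewrite /E -expRD addNr expR0.
    rewrite -[X in _ <= X]hE.
    by apply: ler_wpM2l; [exact: ltW | exact: expR_ge1Dx].
  have h1 : a2 r < c * d * t.
    by move: Mt; rewrite ltr_pdivrMr ?mulr_gt0 // => Mt; lra.
  have h3 : E * a2 r < E * (c * d * t) by rewrite ltr_pM2l.
  have h4 : E * (c * d * t) = d * (E * (c * t)) by ring.
  have h5 : d * (E * (c * t)) <= d * (1 - E) by apply: ler_wpM2l; [exact: ltW | lra].
  have h6 : d * (1 - E) < d by rewrite mulrBr mulr1 ltrBlDr ltrDl mulr_gt0.
  lra.
Qed.

End Easy.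

Section Hard.
Variables (R : realType) (Sigma : Type) (Z : set (biseq Sigma)) (n : nat)
  (f : 'rV[R]_n -> biseq Sigma -> 'rV[R]_n).
Hypothesis HZ : sofic Z.
Variable b : R -> R -> R.
Hypothesis Kb : classKL b.
Hypothesis Hb : forall (k : nat) (x0 : 'rV[R]_n) (z : biseq Sigma), Z z ->
      enorm (Phi f k x0 z) <= b (enorm x0) k%:R.

Let B r (k : nat) := b r k%:R.

Lemma BK (k : nat) : classK (fun r => B r k).
Proof. by have [_ H _] := Kb; apply: H. Qed.
Lemma B_mono r r' k : 0 <= r -> r <= r' -> B r k <= B r' k.
Proof. exact: Kmono (BK k). Qed.
Lemma B_ge0 r k : 0 <= r -> 0 <= B r k.
Proof. by have [_ _ H _] := BK k; apply: H. Qed.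
Lemma B0 k : B 0 k = 0.
Proof. by have [_ _ _ H] := BK k. Qed.
Lemma B_dec r k : 0 <= r -> B r k <= B r 0.
Proof. by move=> r0; have [_ _ H] := Kb; have [H1 _] := H r r0; apply: H1. Qed.
Lemma B_lim r e : 0 <= r -> 0 < e -> exists N : nat, forall j, (N <= j)%N -> B r j < e.
Proof.
move=> r0 e0; have [_ _ H] := Kb; have [_ H2] := H r r0.
move/cvgrPdist_lt: H2 => /(_ e e0) [M [Mr HM]].
exists (archi_bound `|M|) => j Nj.
have := HM j%:R; rewrite sub0r normrN ger0_norm; last by have [_ _ Hg _] := BK j; apply: Hg.
apply; apply: le_lt_trans (ler_norm M) _; apply: lt_le_trans (archi_boundP (normr_ge0 M)) _.
by rewrite ler_nat.
Qed.

Let P s n := `[< forall j, (n <= j)%N -> B s^-1 j < s >].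
Lemma Pex s : 0 < s -> exists n, P s n.
Proof.
move=> s0; have si : 0 <= s^-1 by rewrite invr_ge0 ltW.
by have [N HN] := B_lim si s0; exists N; apply/asboolP.
Qed.
Let tau s := match pselect (0 < s) with left H => ex_minn (Pex H) | right _ => 0%N end.
Lemma tauP s : 0 < s -> forall j, (tau s <= j)%N -> B s^-1 j < s.
Proof.
move=> s0; rewrite /tau; case: pselect => // H.
by case: ex_minnP => m /asboolP Hm _.
Qed.
Lemma tau_min s m : 0 < s -> (forall j, (m <= j)%N -> B s^-1 j < s) -> (tau s <= m)%N.
Proof.
move=> s0 Hm; rewrite /tau; case: pselect => // H.
by case: ex_minnP => m' _ Hmin; apply: Hmin; apply/asboolP.
Qed.
Lemma tau_gt s k : 0 < s -> s <= B s^-1 k -> (k < tau s)%N.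
Proof.
move=> s0 H; rewrite ltnNge; apply/negP => tk; have := tauP s0 tk; lra.
Qed.
Lemma tau_anti s s' : 0 < s -> s <= s' -> (tau s' <= tau s)%N.
Proof.
move=> s0 ss; have s'0 : 0 < s' by exact: lt_le_trans ss.
apply: tau_min => // j tj.
have h1 : B s'^-1 j <= B s^-1 j.
  by apply: B_mono; [rewrite invr_ge0 ltW | rewrite lef_pV2 ?posrE].
have := tauP s0 tj; lra.
Qed.

Let h s := s / 2 ^+ tau s.
Lemma h_mono r s : 0 < r -> r <= s -> h r <= h s.
Proof.
move=> r0 rs; have s0 : 0 < s by exact: lt_le_trans rs.
rewrite /h; apply: (@le_trans _ _ (r / 2 ^+ tau s)).
  apply: ler_wpM2l; first exact: ltW.
  rewrite lef_pV2 ?posrE ?exprn_gt0 //; apply: ler_weXn2l; first by rewrite ler1n.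
  exact: tau_anti.
by apply: ler_wpM2r => //; rewrite invr_ge0 exprn_ge0.
Qed.
Lemma h_pos r : 0 < r -> 0 < h r.
Proof. by move=> r0; rewrite /h divr_gt0 // exprn_gt0. Qed.
Lemma h_unb M : exists r, 0 < r /\ M <= h r.
Proof.
pose s := maxr 1 (maxr (B 1 0 + 1) M).
have s1 : 1 <= s by rewrite le_max lexx.
have s0 : 0 < s by exact: lt_le_trans ltr01 s1.
have hB : B 1 0 + 1 <= s by rewrite /s !le_max lexx orbT.
have ht : tau s = 0%N.
  apply/eqP; rewrite -leqn0; apply: tau_min => // j _.
  have si0 : 0 <= s^-1 by rewrite invr_ge0 ltW.
  have si1 : s^-1 <= 1 by rewrite invf_le1.
  have := B_dec j si0; have := B_mono 0 si0 si1; lra.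
exists s; split => //; rewrite /h ht expr0 divr1 /s !le_max lexx !orbT //.
Qed.

Section Psi.
Variable psi : R -> R.
Hypothesis Kpsi : classKinf psi.
Hypothesis psi_h : forall s, 0 < s -> psi s <= h s.

Lemma psiK : classK psi. Proof. by case: Kpsi. Qed.
Lemma psi0 : psi 0 = 0. Proof. by have [_ _ _ ->] := psiK. Qed.
Lemma psi_ge0 s : 0 <= s -> 0 <= psi s. Proof. by have [_ _ H _] := psiK; apply: H. Qed.
Lemma psi_mono s s' : 0 <= s -> s <= s' -> psi s <= psi s'. Proof. exact: Kmono psiK. Qed.

Lemma case1 r k : 0 <= r -> 0 < B r k -> r <= (B r k)^-1 -> 2 ^+ k * psi (B r k) <= B r 0.
Proof.
move=> r0 s0 rs.
have kt : (k < tau (B r k))%N.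
  apply: tau_gt => //; apply: B_mono => //.
have H := psi_h s0; rewrite /h in H.
apply: (@le_trans _ _ (B r k)); last exact: B_dec.
apply: (@le_trans _ _ (2 ^+ k * (B r k / 2 ^+ tau (B r k)))).
  by apply: ler_wpM2l => //; rewrite exprn_ge0.
rewrite mulrCA ger_pMr // ler_pdivrMr ?exprn_gt0 // mul1r.
by apply: ler_weXn2l; [rewrite ler1n | exact: ltnW].
Qed.

Lemma elem_bound r k N : 0 < r -> (forall j, (N <= j)%N -> B r j < r^-1) ->
  2 ^+ k * psi (B r k) <= maxr (B r 0) (2 ^+ N * psi (B r 0)).
Proof.
move=> r0 HN; have r0' := ltW r0.
have sg0 := B_ge0 k r0'.
rewrite le_eqVlt in sg0; case/orP: sg0 => [/eqP <-|sp].
  by rewrite psi0 mulr0 le_max B_ge0.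
case: (lerP r (B r k)^-1) => rs.
  by apply: le_trans (case1 r0' sp rs) _; rewrite le_max lexx.
have kN : (k < N)%N.
  rewrite ltnNge; apply/negP => Nk; have := HN k Nk.
  have : r^-1 < B r k by rewrite -(invrK (B r k)) ltf_pV2 ?posrE ?invr_gt0.
  lra.
rewrite le_max; apply/orP; right.
apply: ler_pM; first exact: exprn_ge0.
- exact: psi_ge0 (B_ge0 _ r0').
- by apply: ler_weXn2l; [rewrite ler1n | exact: ltnW].
- exact: psi_mono (B_ge0 _ r0') (B_dec _ r0').
Qed.

Lemma small_bound r k : 0 <= r -> r <= 1 -> r * B 1 0 < 1 ->
  2 ^+ k * psi (B r k) <= B r 0.
Proof.
move=> r0 r1 rB.
have sg0 := B_ge0 k r0.
rewrite le_eqVlt in sg0; case/orP: sg0 => [/eqP <-|sp].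
  by rewrite psi0 mulr0 B_ge0.
apply: case1 => //.
have h1 : B r k <= B 1 0 by apply: le_trans (B_dec k r0) (B_mono 0 r0 r1).
have h2 : r * B r k < 1 by apply: le_lt_trans rB; exact: ler_wpM2l.
by rewrite -div1r ler_pdivlMr // ltW.
Qed.

Let E2 r := [set (2 : R) ^+ k * psi (B r k) | k in [set: nat]].
Let F2 r := sup (E2 r).

Lemma E2_ne r : E2 r !=set0. Proof. by exists (2 ^+ 0 * psi (B r 0)); exists 0%N. Qed.
Lemma E2_hub r : 0 <= r -> has_ubound (E2 r).
Proof.
move=> r0; rewrite le_eqVlt in r0; case/orP: r0 => [/eqP <-|rp].
  by exists 0 => _ [k _ <-]; rewrite B0 psi0 mulr0.
have ri : 0 < r^-1 by rewrite invr_gt0.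
have [N HN] := B_lim (ltW rp) ri.
by exists (maxr (B r 0) (2 ^+ N * psi (B r 0))) => _ [k _ <-]; exact: elem_bound.
Qed.

Lemma F2_ge0 r : 0 <= r -> 0 <= F2 r.
Proof.
move=> r0; have E0 : E2 r (2 ^+ 0 * psi (B r 0)) by exists 0%N.
apply: le_trans _ (ub_le_sup (E2_hub r0) E0).
by rewrite expr0 mul1r psi_ge0 // B_ge0.
Qed.
Lemma F2_mono r s : 0 <= r -> r <= s -> F2 r <= F2 s.
Proof.
move=> r0 rs; have s0 : 0 <= s by exact: le_trans rs.
apply: ge_sup; first exact: E2_ne.
move=> _ [k _ <-]; have Ek : E2 s (2 ^+ k * psi (B s k)) by exists k.
apply: le_trans _ (ub_le_sup (E2_hub s0) Ek).
apply: ler_wpM2l; first exact: exprn_ge0.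
by apply: psi_mono; [exact: B_ge0 | exact: B_mono].
Qed.
Lemma F2_0 e : 0 < e -> exists2 d, 0 < d & forall r, 0 <= r -> r <= d -> F2 r <= e.
Proof.
move=> e0; have [Bc _ _ _] := BK 0.
have [d1 d10 Hd1] := (wcontPR _ _ _).1 (within_wcont Bc (lexx 0)) e e0.
have B10 : 0 <= B 1 0 by apply: B_ge0; exact: ler01.
have c0 : 0 < (B 1 0 + 1)^-1 by rewrite invr_gt0; lra.
exists (minr (d1 / 2) (minr 1 (B 1 0 + 1)^-1)).
  by rewrite !lt_min divr_gt0 //= ltr01.
move=> r r0; rewrite !le_min => /andP[rd /andP[r1 rc]].
have rB : r * B 1 0 < 1.
  apply: (@le_lt_trans _ _ ((B 1 0 + 1)^-1 * B 1 0)); first exact: ler_wpM2r.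
  by rewrite mulrC -/(B 1 0 / (B 1 0 + 1)) ltr_pdivrMr ?mul1r; lra.
apply: ge_sup; first exact: E2_ne.
move=> _ [k _ <-]; apply: le_trans (small_bound k r0 r1 rB) _.
have H' : `|0 - r| < d1 by rewrite sub0r normrN ger0_norm //; lra.
have := Hd1 r r0 H'; rewrite B0 sub0r normrN ger0_norm ?B_ge0 // => H2; exact: ltW.
Qed.


Let EV x z := [set (2 : R) ^+ k * psi (enorm (Phi f k x z)) | k in [set: nat]].

Lemma hard_lyap : exists V, seq_lyapunov Z f V.
Proof.
have [a2 [Ka2 Ha2]] := majorant_ex F2_ge0 F2_mono F2_0.
have EV_ne x z : EV x z !=set0 by exists (2 ^+ 0 * psi (enorm (Phi f 0 x z))); exists 0%N.
have EV_ub x z : Z z -> ubound (EV x z) (a2 (enorm x)).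
  move=> Zz _ [k _ <-]; apply: le_trans (Ha2 _ (enorm_ge0 x)).
  have Ek : E2 (enorm x) (2 ^+ k * psi (B (enorm x) k)) by exists k.
  apply: le_trans _ (ub_le_sup (E2_hub (enorm_ge0 x)) Ek).
  apply: ler_wpM2l; first exact: exprn_ge0.
  by apply: psi_mono; [exact: enorm_ge0 | exact: Hb].
have EV_hub x z : Z z -> has_ubound (EV x z) by move=> Zz; exists (a2 (enorm x)); exact: EV_ub.
exists (fun x z => sup (EV x z)), psi, a2, (1 / 2); split => //.
- by rewrite ltr_pdivrMr // mul1r ltr1n.
move=> x z Zz; split.
- have E0 : EV x z (2 ^+ 0 * psi (enorm (Phi f 0 x z))) by exists 0%N.
  by have := ub_le_sup (EV_hub _ _ Zz) E0; rewrite expr0 mul1r.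
- apply: ge_sup; [exact: EV_ne | exact: EV_ub].
- apply: ge_sup; first exact: EV_ne.
  move=> _ [k _ <-]; rewrite Phi_shift.
  have Ek : EV x z (2 ^+ k.+1 * psi (enorm (Phi f k.+1 x z))) by exists k.+1.
  have := ub_le_sup (EV_hub _ _ Zz) Ek; rewrite exprS.
  set u := psi _; set w := sup _ => H.
  have : 2 ^+ k * u = 1 / 2 * (2 * 2 ^+ k * u) by field.
  by move=> ->; apply: ler_wpM2l H; rewrite divr_ge0.
Qed.
End Psi.

Lemma GUAS_lyap : exists V, seq_lyapunov Z f V.
Proof.
have [psi [Kpsi Hpsi]] := minorant_ex h_mono h_pos h_unb.
exact: hard_lyap Kpsi Hpsi.
Qed.
End Hard.

Unset Implicit Arguments.
Theorem mainTheorem1 (R : realType) (Sigma : countType) (HSigma : inhabited Sigma)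
  (Z : set (biseq Sigma)) (HZ : sofic Z) (n : nat)
  (f : 'rV[R]_n -> biseq Sigma -> 'rV[R]_n) :
  GUAS Z f <-> exists V : 'rV[R]_n -> biseq Sigma -> R, seq_lyapunov Z f V.
Proof.
split.
- by move=> [b [Kb Hb]]; exact: GUAS_lyap Kb Hb.
- move=> [V [a1 [a2 [g [Ka1 Ka2 g0 g1 H]]]]]; apply: (@lyap_GUAS _ _ _ _ _ V HZ a1 a2 g Ka1 Ka2 g0 g1 H).
Qed.
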